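(* In $K_2^M(\mathbb{Q}(E_{64}))\otimes\mathbb{Q}$ one has $$p_*(e_4)=\left\{\frac{v-2u}{v},\ \frac{32u^2}{(u-2)^2v^2}\right\}+\left\{\frac{(u-2)^2}{u^2+4},\ -\frac{v}{2u}\right\}.$$
   Context: Let $X_4\colon x^4+y^4=1$ be the Fermat quartic over $\mathbb{Q}$, with Ross element $e_4=\{1-x,1-y\}\in K_2^M(\mathbb{Q}(X_4))\otimes\mathbb{Q}$. Let $E_{64}\colon v^2=u^3-4u$, and let $p\colon X_4\to E_{64}$ be the degree-$2$ morphism $(u_0:v_0:w_0)=(2x_0(y_0^2+z_0^2):4y_0(y_0^2+z_0^2):x_0^3)$, i.e. $u=2(y^2+1)/x^2$, $v=4y(y^2+1)/x^3$. The map $p_*$ is the Milnor $K$-theory transfer $\mathrm{Tr}_{\mathbb{Q}(X_4)/\mathbb{Q}(E_{64})}$ for the extension of function fields induced by $p$. *)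

(* Defs.v *)
From HB Require Import structures.
From mathcomp Require Import all_boot all_order all_algebra.
Set Implicit Arguments. Unset Strict Implicit. Unset Printing Implicit Defensive.
Import Order.TTheory GRing.Theory Num.Theory.
Local Open Scope ring_scope.

(* K_2^M(K) (x) Q is the universal target of such symbols; an identity in
   K_2^M(K) (x) Q holds iff it holds after applying every such symbol. *)
Definition steinberg (K : fieldType) (W : lmodType rat) (s : K -> K -> W) : Prop :=
  [/\ forall a a' b, a != 0 -> a' != 0 -> b != 0 -> s (a * a') b = s a b + s a' b,
      forall a b b', a != 0 -> b != 0 -> b' != 0 -> s a (b * b') = s a b + s a b'
    & forall a, a != 0 -> a != 1 -> s a (1 - a) = 0].

(* Evaluation of a bivariate rational polynomial P(X,Y) (as {poly {poly rat}},
   outer variable Y) at (a, b) in a characteristic-zero field K. *)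
Definition eval2 (K : fieldType) (P : {poly {poly rat}}) (a b : K) : K :=
  (map_poly (fun r : {poly rat} => (map_poly (@ratr K) r).[a]) P).[b].

(* Main.v *)
Require Import Defs.
From HB Require Import structures.
From mathcomp Require Import all_boot all_order all_algebra.
From mathcomp Require Import ring.
Import Order.TTheory GRing.Theory Num.Theory.
Local Open Scope ring_scope.

Module StH.
Set Implicit Arguments. Unset Strict Implicit.
Section St.
Variables (K : fieldType) (W : lmodType rat) (s : K -> K -> W).
Hypothesis hs : steinberg s.

Lemma w2 (w : W) : w + w = 0 -> w = 0.
Proof.
move=> h; have -> : w = (2^-1 : rat) *: (w + w).
  by rewrite scalerDr -scalerDl (_ : 2^-1 + 2^-1 = 1 :> rat) ?scale1r.
by rewrite h scaler0.
Qed.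

Lemma wx (w : W) : w = w + w -> w = 0.
Proof. by move=> h; apply: (addrI w); rewrite addr0 -h. Qed.

Lemma sL1 b : b != 0 -> s 1 b = 0.
Proof. case: hs => hl _ _ hb; apply: wx; by rewrite -hl ?oner_neq0 ?mulr1. Qed.

Lemma sR1 a : a != 0 -> s a 1 = 0.
Proof. case: hs => _ hr _ ha; apply: wx; by rewrite -hr ?oner_neq0 ?mulr1. Qed.

Lemma sLV a b : a != 0 -> b != 0 -> s a^-1 b = - s a b.
Proof.
case: hs => hl _ _ ha hb; apply/eqP; rewrite -addr_eq0 -hl ?invr_eq0 //.
by rewrite mulVf // sL1.
Qed.

Lemma sRV a b : a != 0 -> b != 0 -> s a b^-1 = - s a b.
Proof.
case: hs => _ hr _ ha hb; apply/eqP; rewrite -addr_eq0 -hr ?invr_eq0 //.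
by rewrite mulVf // sR1.
Qed.

Lemma m1_neq0 : (-1 : K) != 0. Proof. by rewrite oppr_eq0 oner_neq0. Qed.

Lemma sLm1 b : b != 0 -> s (-1) b = 0.
Proof.
case: hs => hl _ _ hb; apply: w2; rewrite -hl ?m1_neq0 //.
by rewrite mulrNN mulr1 sL1.
Qed.

Lemma sRm1 a : a != 0 -> s a (-1) = 0.
Proof.
case: hs => _ hr _ ha; apply: w2; rewrite -hr ?m1_neq0 //.
by rewrite mulrNN mulr1 sR1.
Qed.

Lemma sLN a b : a != 0 -> b != 0 -> s (- a) b = s a b.
Proof.
case: hs => hl _ _ ha hb; by rewrite -mulN1r hl ?m1_neq0 // sLm1 // add0r.
Qed.

Lemma sRN a b : a != 0 -> b != 0 -> s a (- b) = s a b.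
Proof.
case: hs => _ hr _ ha hb; by rewrite -mulN1r hr ?m1_neq0 // sRm1 // add0r.
Qed.

Lemma sAA a : a != 0 -> s a a = 0.
Proof.
move=> ha; case: (eqVneq a 1) => [->|ha1]; first by rewrite sL1 ?oner_neq0.
case: hs => hl hr hst.
have hai : a^-1 != 0 by rewrite invr_eq0.
have hai1 : a^-1 != 1 by apply: contra ha1 => /eqP h; rewrite -[a]invrK h invr1.
have h1a : 1 - a != 0 by rewrite subr_eq0 eq_sym.
have h1ai : 1 - a^-1 != 0 by rewrite subr_eq0 eq_sym.
have e : - a = (1 - a) / (1 - a^-1).
  by field; rewrite ha subr_eq0 ha1.
rewrite -(sRN ha ha) e hr ?invr_eq0 // sRV // hst //.
by have := sLV hai h1ai; rewrite invrK hst // oppr0 => ->; rewrite subrr.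
Qed.

Lemma santi a b : a != 0 -> b != 0 -> s a b = - s b a.
Proof.
case: hs => hl hr _ ha hb; apply/eqP; rewrite -addr_eq0.
have hab : a * b != 0 by rewrite mulf_neq0.
have := sAA hab; rewrite hl // !hr // !(sAA ha) !(sAA hb) // add0r addr0 => ->.
by [].
Qed.

Lemma sst a : a != 0 -> a != 1 -> s a (1 - a) = 0.
Proof. by case: hs => _ _ h; apply: h. Qed.

Lemma sst' a : a != 0 -> a != 1 -> s (1 - a) a = 0.
Proof.
move=> ha ha1; have h1 : 1 - a != 0 by rewrite subr_eq0 eq_sym.
by rewrite (santi h1 ha) // sst // oppr0.
Qed.
End St.

End StH.
Import StH.

Lemma absF (K : fieldType) (W : lmodType rat) (s : K -> K -> W) (hs : steinberg s)
  (c k m : K) : c != 0 -> c != 1 -> k != 0 -> m != 0 ->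
  s (1 - c) k - s c k - s (1 - c) m = s ((c - 1) / c) (k / (c ^+ 2 * m)) + s m (- c).
Proof.
move=> c0 c1 k0 m0.
have hs' := hs; case: hs' => hl hr _.
have h1c : 1 - c != 0 by rewrite subr_eq0 eq_sym.
have hc1 : c - 1 != 0 by rewrite subr_eq0.
have ci0 : c^-1 != 0 by rewrite invr_eq0.
have ci1 : c^-1 != 1 by apply: contra c1 => /eqP h; rewrite -[c]invrK h invr1.
have ha : (c - 1) / c != 0 by rewrite mulf_neq0.
have hc2 : c ^+ 2 * m != 0 by rewrite mulf_neq0 // expf_neq0.
have E : forall X, X != 0 -> s ((c - 1) / c) X = s (1 - c) X - s c X.
  move=> X hX; rewrite hl // (sLV hs) // -[c - 1]opprB (sLN hs) //.
have Ec : s ((c - 1) / c) c = 0.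
  have -> : (c - 1) / c = 1 - c^-1 by field.
  rewrite -{2}(invrK c) (sRV hs) // ?(sst' hs ci0 ci1) ?oppr0 //.
  by rewrite subr_eq0 eq_sym.
rewrite hr ?invr_eq0 // (sRV hs) // hr ?expf_neq0 // expr2 hr // Ec !E //.
rewrite (sRN hs) // (santi hs m0 c0) //.
by rewrite !add0r opprB addrA addrAC addrK.
Qed.

Lemma trans_int (L : fieldType) (x : L)
  (htr : forall p : {poly rat}, p != 0 -> (map_poly (@ratr L) p).[x] != 0)
  (s : seq int) (n : nat) : s`_n != 0 -> horner_rec [seq (i%:~R : L) | i <- s] x != 0.
Proof.
move=> hn.
have hp : Poly [seq (i%:~R : rat) | i <- s] != 0.
  apply/eqP => /(congr1 (fun p : {poly rat} => p`_n)).
  rewrite coef_Poly coef0 (nth_map 0).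
    by move/eqP; rewrite intr_eq0 (negbTE hn).
  by case: ltnP hn => // h; rewrite nth_default.
have := htr _ hp; rewrite map_Poly_id0; last by exact: (ratr_nat _ 0).
rewrite horner_Poly -map_comp.
rewrite (eq_map (g := fun i : int => (i%:~R : L))) // => i /=; by rewrite ratr_int.
Qed.

Lemma solveT (V : zmodType) (A T B D : V) : - A - T - - B - (0 + D - 0) = 0 -> T = B - A - D.
Proof.
rewrite add0r subr0 opprK => /eqP; rewrite subr_eq0 addrAC => /eqP <-.
by rewrite opprB [- A + B]addrC (addrC (B - A)) subrK.
Qed.

Theorem mainTheorem10
  (L F : fieldType) (iota : {rmorphism F -> L}) (x y : L) (u v : F) :
  [pchar L] =i pred0 ->
  x ^+ 4 + y ^+ 4 = 1 ->
  (forall p : {poly rat}, p != 0 -> (map_poly (@ratr L) p).[x] != 0) ->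
  (forall b : L, exists P Q : {poly {poly rat}},
       eval2 Q x y != 0 /\ b = eval2 P x y / eval2 Q x y) ->
  iota u = 2 * (y ^+ 2 + 1) / x ^+ 2 ->
  iota v = 4 * y * (y ^+ 2 + 1) / x ^+ 3 ->
  (forall f : F, exists P Q : {poly {poly rat}},
       eval2 Q u v != 0 /\ f = eval2 P u v / eval2 Q u v) ->
  forall (W : lmodType rat) (s : F -> F -> W) (t : L -> L -> W),
    steinberg s -> steinberg t ->
    (forall a p q : F, a != 0 -> iota p + iota q * x != 0 ->
       t (iota a) (iota p + iota q * x)
       = s a (p ^+ 2 - q ^+ 2 * (4 * u / (u ^+ 2 + 4)))) ->
    t (1 - x) (1 - y)
    = s ((v - 2 * u) / v) (32 * u ^+ 2 / ((u - 2) ^+ 2 * v ^+ 2))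
      + s ((u - 2) ^+ 2 / (u ^+ 2 + 4)) (- v / (2 * u)).
Proof.
move=> hchar hrel htr _ hu hv _ W s t hs ht hproj.
move/pcharf0P: hchar => hch.
have h2L : (2 : L) != 0 by rewrite hch.
have poly_ne : forall (sq : seq int) (n : nat) (e : L), sq`_n != 0 ->
    horner_rec [seq (i%:~R : L) | i <- sq] x = e -> e != 0.
  by move=> sq n e hn <-; apply: (@trans_int L x htr sq n hn).
have x0 : x != 0 by apply: (poly_ne [:: 0; 1] 1%N) => //=; ring.
have x1 : x - 1 != 0 by apply: (poly_ne [:: -1; 1] 1%N) => //=; ring.
have x41 : x ^+ 4 - 1 != 0 by apply: (poly_ne [:: -1; 0; 0; 0; 1] 4%N) => //=; ring.
have x4h : 2 * x ^+ 4 - 1 != 0 by apply: (poly_ne [:: -1; 0; 0; 0; 2] 4%N) => //=; ring.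
have x4z : x ^+ 4 != 0 by rewrite expf_neq0.
have hx4 : x ^+ 4 = 1 - y ^+ 4 by rewrite -hrel addrK.
have y0 : y != 0.
  by apply: contra x41 => /eqP y0; rewrite hx4 y0 expr0n /= subr0 subrr.
have y1 : y != 1.
  by apply: contra x4z => /eqP y1; rewrite hx4 y1 expr1n subrr.
have yy : y ^+ 2 + 1 != 0.
  apply: contra x4z => /eqP h.
  have h2 : y ^+ 2 = -1 by apply/eqP; rewrite -addr_eq0 h.
  have e : y ^+ 4 = 1 by rewrite (_ : 4%N = (2 * 2)%N) // exprM h2 sqrrN expr1n.
  by rewrite hx4 e subrr.
have xy : x != y.
  apply: contra x4h => /eqP e; rewrite -e in hrel; apply/eqP.
  by transitivity (2 * x ^+ 4 - (x ^+ 4 + x ^+ 4)); [rewrite hrel | ring].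
have yx2 : y ^+ 2 + 1 - x ^+ 2 != 0.
  apply/eqP => h.
  have e1 : y ^+ 2 = x ^+ 2 - 1.
    by apply/eqP; rewrite -(can_eq (addrK 1)) subrK -subr_eq0 h.
  have e2 : 2 * x ^+ 2 * (x ^+ 2 - 1) = 0.
    transitivity (x ^+ 4 + (y ^+ 2) ^+ 2 - 1); last by rewrite -exprM hrel subrr.
    by rewrite e1; ring.
  move/eqP: e2; rewrite !mulf_eq0 (negbTE h2L) (negbTE x0) /= => /eqP e3.
  have : y ^+ 2 == 0 by rewrite e1 e3.
  by rewrite expf_eq0 /= (negbTE y0).
have inj := fmorph_inj iota.
have nzF : forall f : F, iota f != 0 -> f != 0 by move=> f; rewrite fmorph_eq0.
have h4L : (4 : L) != 0 by rewrite hch.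
have h8L : (8 : L) != 0 by rewrite hch.
have h2F : (2 : F) != 0 by apply: nzF; rewrite rmorph_nat.
have u0 : u != 0 by apply: nzF; rewrite hu !mulf_neq0 ?invr_eq0 ?expf_neq0.
have v0 : v != 0 by apply: nzF; rewrite hv !mulf_neq0 ?invr_eq0 ?expf_neq0.
have Q0 : u ^+ 2 + 4 != 0.
  apply: nzF; rewrite rmorphD rmorphXn hu rmorph_nat.
  have -> : (2 * (y ^+ 2 + 1) / x ^+ 2) ^+ 2 + 4
           = 8 * (y ^+ 2 + 1) / x ^+ 4 + 4 * (x ^+ 4 + y ^+ 4 - 1) / x ^+ 4.
    by field.
  by rewrite hrel subrr mulr0 mul0r addr0 !mulf_neq0 ?invr_eq0 ?expf_neq0.
have u2 : u - 2 != 0.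
  apply: nzF; rewrite rmorphB hu rmorph_nat.
  have -> : 2 * (y ^+ 2 + 1) / x ^+ 2 - 2 = 2 * (y ^+ 2 + 1 - x ^+ 2) / x ^+ 2.
    by field.
  by rewrite !mulf_neq0 ?invr_eq0 ?expf_neq0.
have P0 : (u - 2) ^+ 2 != 0 by rewrite expf_neq0.
have curve : v ^+ 2 = u ^+ 3 - 4 * u.
  apply: inj; rewrite rmorphB !rmorphXn rmorphM hu hv rmorph_nat.
  apply/eqP; rewrite -subr_eq0; apply/eqP.
  transitivity (8 * (y ^+ 2 + 1) / x ^+ 6 * (x ^+ 4 + y ^+ 4 - 1)).
    by field.
  by rewrite hrel subrr mulr0.
set c := v / (2 * u).
have hC : iota c = y / x.
  rewrite /c fmorph_div rmorphM rmorph_nat hu hv; field.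
  by rewrite x0 yy h2L.
set C := iota c.
have hy : y = C * x by rewrite /C hC divfK.
have C0 : C != 0 by rewrite /C hC mulf_neq0 ?invr_eq0.
have C1 : C != 1.
  by rewrite /C hC; apply: contra xy => /eqP e; rewrite eq_sym -[y](divfK x0) e mul1r.
have c0 : c != 0 by apply: nzF.
have c1 : c != 1 by apply: contra C1 => /eqP e; rewrite /C e rmorph1.
have h1c : 1 - c != 0 by rewrite subr_eq0 eq_sym.
have h1C : 1 - C != 0 by rewrite subr_eq0 eq_sym.
have a1 : 1 - x != 0 by rewrite -opprB oppr_eq0.
have a2 : 1 - y != 0 by rewrite subr_eq0 eq_sym.
have hB0 : (1 - y) / (1 - C) != 0 by rewrite mulf_neq0 ?invr_eq0.
have e1B : 1 - (1 - y) / (1 - C) = C * (x - 1) / (1 - C).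
  by rewrite hy; field.
have hZ : C * (x - 1) / (1 - C) != 0 by rewrite !mulf_neq0 ?invr_eq0.
have hB1 : (1 - y) / (1 - C) != 1.
  by rewrite -subr_eq0 -opprB oppr_eq0 e1B.
have st := sst ht hB0 hB1; rewrite e1B in st.
have ht' := ht; case: ht' => htl htr2 _.
rewrite htl ?invr_eq0 // (sLV ht) // in st.
rewrite !htr2 ?invr_eq0 ?mulf_neq0 // in st.
rewrite !(sRV ht) // -[x - 1]opprB !(sRN ht) // in st.
rewrite (sst' ht C0 C1) (sAA ht h1C) in st.
rewrite (santi ht a2 C0) (santi ht a2 a1) (santi ht a2 h1C) in st.
have e2 : 1 - y = iota 1 + iota (- c) * x by rewrite rmorph1 rmorphN mulNr -hy.
have e3 : 1 - x = iota 1 + iota (- 1) * x by rewrite rmorph1 rmorphN1 mulN1r.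
have e4 : 1 - C = iota (1 - c) by rewrite rmorphB rmorph1.
have P1 : t C (1 - y) = s c (1 ^+ 2 - (- c) ^+ 2 * (4 * u / (u ^+ 2 + 4))).
  by rewrite e2 hproj // -e2.
have P2 : t (1 - C) (1 - y) = s (1 - c) (1 ^+ 2 - (- c) ^+ 2 * (4 * u / (u ^+ 2 + 4))).
  by rewrite e4 e2 hproj // -e2.
have P3 : t (1 - C) (1 - x) = s (1 - c) (1 ^+ 2 - (- 1) ^+ 2 * (4 * u / (u ^+ 2 + 4))).
  by rewrite e4 e3 hproj // -e3.
rewrite P1 P2 P3 in st.
have h8F : (8 : F) != 0 by apply: nzF; rewrite rmorph_nat.
have h4F : (4 : F) != 0 by apply: nzF; rewrite rmorph_nat.
have Z1 : 1 ^+ 2 - (- c) ^+ 2 * (4 * u / (u ^+ 2 + 4)) = 8 / (u ^+ 2 + 4).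
  rewrite sqrrN /c expr_div_n exprMn curve expr1n; field.
  by rewrite ?Q0 ?u0 ?v0 ?u2 ?h2F ?h4F ?h8F ?P0.
have Z3 : 1 ^+ 2 - (- 1) ^+ 2 * (4 * u / (u ^+ 2 + 4)) = (u - 2) ^+ 2 / (u ^+ 2 + 4).
  by field; rewrite ?Q0 ?u0 ?v0 ?u2 ?h2F ?h4F ?h8F ?P0.
rewrite Z1 Z3 in st; rewrite (solveT _ _ _ _ _ st).
have G1 : (v - 2 * u) / v = (c - 1) / c.
  by rewrite /c; field; rewrite ?Q0 ?u0 ?v0 ?u2 ?h2F ?h4F ?h8F ?P0.
have G2 : 32 * u ^+ 2 / ((u - 2) ^+ 2 * v ^+ 2)
        = (8 / (u ^+ 2 + 4)) / (c ^+ 2 * ((u - 2) ^+ 2 / (u ^+ 2 + 4))).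
  by rewrite /c; field; rewrite ?Q0 ?u0 ?v0 ?u2 ?h2F ?h4F ?h8F ?P0.
have G3 : - v / (2 * u) = - c by rewrite /c mulNr.
rewrite G1 G2 G3.
apply: (absF _ _ _ hs _ _ _ c0 c1); by rewrite mulf_neq0 ?invr_eq0.
Qed.
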